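(* Let $(D,\Gamma)$ be a consistent action theory, $n\ge0$, and let $s_0a_0s_1\dots a_{n-1}s_n$ be a trajectory in $D$ with $s_0=s_0^\Gamma$. Then the program $\pi$ has an answer set $X$ such that $s_t(X)=s_t$ for every $t\in\{0,\dots,n\}$ and $occ(a_t,t)\in X$ for every $t\in\{0,\dots,n-1\}$.
   Context: Action language $\mathcal{B}$: fix finite sets $\mathbf{F}$ of fluents and $\mathbf{A}$ of actions. A fluent literal is $f$ or $\neg f$ ($f\in\mathbf{F}$); the complement $\bar l$ of $f$ is $\neg f$ and of $\neg f$ is $f$. A set of fluent literals is consistent if it contains no pair $f,\neg f$; an interpretation is a maximal consistent set. For a set $u$ of literals, $u\models p_1\wedge\dots\wedge p_k$ means $\{p_1,\dots,p_k\}\subseteq u$. A domain description $D$ is a finite set of static causal laws $\mathbf{caused}(\{p_1,\dots,p_k\},f)$ (their set is $D_C$), dynamic causal laws $\mathbf{causes}(a,f,\{p_1,\dots,p_k\})$ and executability conditions $\mathbf{executable}(a,\{p_1,\dots,p_k\})$, with $a\in\mathbf{A}$ and $f,p_i$ fluent literals; $\Gamma$ is a set of propositions $\mathbf{initially}(f)$. A consistent set $u$ is closed under $D_C$ if for every $\mathbf{caused}(P,f)\in D_C$ with $P\subseteq u$, $f\in u$; $Cl_{D_C}(u)$ is the least consistent superset of $u$ closed under $D_C$ (undefined if none). A state is an interpretation closed under $D_C$. Action $a$ is executable in state $s$ if some $\mathbf{executable}(a,P)\in D$ has $P\subseteq s$. $E(a,s)=\{f\mid \mathbf{causes}(a,f,P)\in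 D,\ P\subseteq s\}$. $\Phi(a,s)=\{s'\mid s'\text{ a state},\ s'=Cl_{D_C}(E(a,s)\cup(s\cap s'))\}$ if $a$ is executable in $s$, and $\Phi(a,s)=\emptyset$ otherwise. A trajectory is a sequence $s_0a_0s_1\dots a_{m-1}s_m$ of states $s_i$ and actions $a_i$ with $s_{i+1}\in\Phi(a_i,s_i)$. $D$ is consistent if $\Phi(a,s)\ne\emptyset$ whenever $a$ is executable in state $s$; $(D,\Gamma)$ is consistent if $D$ is consistent and $s_0^\Gamma:=\{f\mid\mathbf{initially}(f)\in\Gamma\}$ is a state of $D$. Answer sets: a ground normal program consists of rules $h\leftarrow b_1,\dots,b_m,\mathit{not}\,c_1,\dots,\mathit{not}\,c_r$ and constraints $\bot\leftarrow b_1,\dots,b_m,\mathit{not}\,c_1,\dots,\mathit{not}\,c_r$. For a set $S$ of atoms, the reduct $\Pi^S$ deletes every rule/constraint containing $\mathit{not}\,c$ with $c\in S$ and deletes all $\mathit{not}$-literals from the rest; $S$ is an answer set of $\Pi$ if $S$ is the least set of atoms closed under the non-constraint rules of $\Pi^S$ and no constraint of $\Pi^S$ has its whole body contained in $S$. The program $\pi$ (ground; $t$ ranges over $\{0,\dots,n\}$ unless stated): (1) $holds(l,0)\leftarrow$ for each $\mathbf{initially}(l)\in\Gamma$; (2) $possible(a,t)\leftarrow holds(p_1,t),\dots,holds(p_k,t)$ for each $\mathbf{executable}(a,\{p_1,\dots,p_k\})\in D$; (3) for $t\in\{0,\dots,n-1\}$, $holds(f,t+1)\leftarrow occ(a,t),possible(a,t),holds(p_1,t),\dots,holds(p_k,t)$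 for each $\mathbf{causes}(a,f,\{p_1,\dots,p_k\})\in D$; (4) $holds(f,t)\leftarrow holds(p_1,t),\dots,holds(p_k,t)$ for each $\mathbf{caused}(\{p_1,\dots,p_k\},f)\in D$; (5) $occ(a,t)\leftarrow possible(a,t),\mathit{not}\,nocc(a,t)$ for each action $a$; (6) $nocc(a,t)\leftarrow occ(b,t)$ for each pair of distinct actions $a\ne b$; (7) for $t\in\{0,\dots,n-1\}$, $holds(l,t+1)\leftarrow holds(l,t),\mathit{not}\,holds(\bar l,t+1)$ for each fluent literal $l$; (8) $\bot\leftarrow holds(f,t),holds(\neg f,t)$ for each fluent $f$. For a set $M$ of atoms, $s_i(M)=\{l\mid l\text{ a fluent literal},\ holds(l,i)\in M\}$. *)

(* Defs.v *)
From Stdlib Require List.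
From mathcomp Require Import all_boot.
Set Implicit Arguments.
Unset Strict Implicit.
Unset Printing Implicit Defensive.

(* A fluent literal over fluents F: (f, true) is f, (f, false) is ~f. *)
Definition lit (F : finType) : finType := (F * bool)%type.
Definition pos_lit (F : finType) (f : F) : lit F := (f, true).
Definition neg_lit (F : finType) (f : F) : lit F := (f, false).
Definition compl (F : finType) (l : lit F) : lit F := (l.1, ~~ l.2).

Section ActionLanguage.
Variables (F A : finType).

(* A domain description: static causal laws caused(P, f) as (P, f),
   dynamic causal laws causes(a, f, P) as (a, f, P),
   executability conditions executable(a, P) as (a, P). *)
Record domain := Domain {
  static_laws : seq (seq (lit F) * lit F);
  dynamic_laws : seq (A * lit F * seq (lit F));
  exec_conds : seq (A * seq (lit F))
}.

Variable D : domain.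

Definition lits_in (P : seq (lit F)) (u : {set lit F}) : bool :=
  all (fun p => p \in u) P.

Definition consistent_set (u : {set lit F}) : Prop :=
  forall f : F, ~ (pos_lit f \in u /\ neg_lit f \in u).

Definition interpretation (u : {set lit F}) : Prop :=
  consistent_set u /\
  forall v : {set lit F}, consistent_set v -> u \subset v -> v = u.

Definition closed_DC (u : {set lit F}) : Prop :=
  forall Pf, Pf \in static_laws D -> lits_in Pf.1 u -> Pf.2 \in u.

(* is_Cl u v : v = Cl_{D_C}(u), i.e. v is the least consistent superset
   of u closed under D_C (in particular Cl_{D_C}(u) is defined). *)
Definition is_Cl (u v : {set lit F}) : Prop :=
  [/\ consistent_set v, closed_DC v, u \subset v &
      forall w, consistent_set w -> closed_DC w -> u \subset w -> v \subset w].

Definition state (s : {set lit F}) : Prop := interpretation s /\ closed_DC s.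

Definition executable (a : A) (s : {set lit F}) : Prop :=
  exists2 P, (a, P) \in exec_conds D & lits_in P s.

Definition E (a : A) (s : {set lit F}) : {set lit F} :=
  [set f | has (fun d : A * lit F * seq (lit F) =>
                  [&& d.1.1 == a, d.1.2 == f & lits_in d.2 s]) (dynamic_laws D)].

Definition Phi (a : A) (s s' : {set lit F}) : Prop :=
  executable a s /\ state s' /\ is_Cl (E a s :|: (s :&: s')) s'.

Definition trajectory (n : nat) (s : nat -> {set lit F}) (a : nat -> A) : Prop :=
  (forall t, t <= n -> state (s t)) /\
  (forall t, t < n -> Phi (a t) (s t) (s t.+1)).

Definition consistent_domain : Prop :=
  forall (a : A) (s : {set lit F}), state s -> executable a s ->
    exists s', Phi a s s'.

Definition s0Gamma (Gamma : seq (lit F)) : {set lit F} :=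
  [set l | l \in Gamma].

Definition consistent_theory (Gamma : seq (lit F)) : Prop :=
  consistent_domain /\ state (s0Gamma Gamma).

End ActionLanguage.

Section AnswerSets.
Variable atom : Type.

(* head = Some h : rule  h <- pos, not neg ;  head = None : constraint *)
Record rule := Rule { rhead : option atom; rpos : seq atom; rneg : seq atom }.

Definition program := rule -> Prop.

(* S' is closed under the non-constraint rules of the reduct Pi^S *)
Definition closed_reduct (Pi : program) (S S' : atom -> Prop) : Prop :=
  forall r h, Pi r -> rhead r = Some h ->
    (forall c, List.In c (rneg r) -> ~ S c) ->
    (forall b, List.In b (rpos r) -> S' b) -> S' h.

Definition answer_set (Pi : program) (S : atom -> Prop) : Prop :=
  [/\ closed_reduct Pi S S,
      (forall S', closed_reduct Pi S S' -> forall x, S x -> S' x) &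
      (forall r, Pi r -> rhead r = None ->
         (forall c, List.In c (rneg r) -> ~ S c) ->
         ~ (forall b, List.In b (rpos r) -> S b))].
End AnswerSets.

Section Program.
Variables (F A : finType).

Inductive atom :=
| Holds of lit F & nat
| Possible of A & nat
| Occ of A & nat
| Nocc of A & nat.

Variables (D : domain F A) (Gamma : seq (lit F)) (n : nat).

Definition holds_all (P : seq (lit F)) (t : nat) : seq atom :=
  map (fun p => Holds p t) P.

Inductive pi_prog : rule atom -> Prop :=
| pi1 l : l \in Gamma -> pi_prog (Rule (Some (Holds l 0)) [::] [::])
| pi2 a P t : (a, P) \in exec_conds D -> t <= n ->
    pi_prog (Rule (Some (Possible a t)) (holds_all P t) [::])
| pi3 a f P t : (a, f, P) \in dynamic_laws D -> t < n ->
    pi_prog (Rule (Some (Holds f t.+1)) (Occ a t :: Possible a t :: holds_all P t) [::])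
| pi4 P f t : (P, f) \in static_laws D -> t <= n ->
    pi_prog (Rule (Some (Holds f t)) (holds_all P t) [::])
| pi5 a t : t <= n ->
    pi_prog (Rule (Some (Occ a t)) [:: Possible a t] [:: Nocc a t])
| pi6 a b t : a != b -> t <= n ->
    pi_prog (Rule (Some (Nocc a t)) [:: Occ b t] [::])
| pi7 l t : t < n ->
    pi_prog (Rule (Some (Holds l t.+1)) [:: Holds l t] [:: Holds (compl l) t.+1])
| pi8 f t : t <= n ->
    pi_prog (Rule None [:: Holds (pos_lit f) t; Holds (neg_lit f) t] [::]).

End Program.

Arguments Holds {F A}.
Arguments Possible {F A}.
Arguments Occ {F A}.
Arguments Nocc {F A}.

(* Main.v *)
Require Import Defs.
From mathcomp Require Import all_boot.
From Stdlib Require Import Classical ClassicalEpsilon.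

Set Implicit Arguments.
Unset Strict Implicit.

Section Proof.
Variables (F A : finType) (D : domain F A).

Definition pb (P : Prop) : bool := if excluded_middle_informative P then true else false.
Lemma pbP (P : Prop) : pb P <-> P.
Proof. rewrite /pb; case: excluded_middle_informative => //= _; split => //. Qed.

Definition execb (b : A) (u : {set lit F}) : bool :=
  has (fun d : A * seq (lit F) => (d.1 == b) && lits_in d.2 u) (exec_conds D).

Lemma execbP b u : execb b u <-> executable D b u.
Proof.
split.
- case/hasP => [[b' P] HP /andP [/eqP /= Hb HPs]]; subst b'; by exists P.
- case=> P HP HPs; apply/hasP; exists (b, P) => //=; by rewrite eqxx.
Qed.

Lemma interp_complete (u : {set lit F}) : interpretation u ->
  forall f, pos_lit f \in u \/ neg_lit f \in u.
Proof.
case=> Hc Hm f; apply: NNPP => Hn.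
have Hp : pos_lit f \notin u by apply/negP => H; apply: Hn; left.
have Hq : neg_lit f \notin u by apply/negP => H; apply: Hn; right.
have Hcv : consistent_set (pos_lit f |: u).
  move=> g [/setU1P H1 /setU1P H2].
  case: H2 => [E|H2]; first by rewrite /neg_lit /pos_lit in E; case: E.
  case: H1 => [E|H1].
  - case: E => E; subst g; by rewrite H2 in Hq.
  - by apply: (Hc g).
have := Hm _ Hcv (subsetUr _ _) => E.
by move: Hp; rewrite -E setU11.
Qed.

Lemma In_mem (T : eqType) (x : T) (s : seq T) : List.In x s -> x \in s.
Proof.
elim: s => //= y s IH [->|H]; first by rewrite inE eqxx.
by rewrite inE IH ?orbT.
Qed.

Lemma In_holds_all (b : atom F A) P t : List.In b (@holds_all F A P t) ->
  exists p, b = Holds p t /\ p \in P.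
Proof.
elim: P => //= p P IH [<-|H]; first by exists p; rewrite inE eqxx.
case: (IH H) => q [-> Hq]; exists q; by rewrite inE Hq orbT.
Qed.

Lemma In_holds_all_rev (p : lit F) P t : p \in P -> List.In (Holds p t) (@holds_all F A P t).
Proof.
elim: P => //= q P IH; rewrite inE => /orP [/eqP ->|H]; [by left | right; exact: IH].
Qed.

End Proof.

Theorem mainTheorem6 (F A : finType) (D : domain F A) (Gamma : seq (lit F))
    (n : nat) (s : nat -> {set lit F}) (a : nat -> A) :
  consistent_theory D Gamma ->
  trajectory D n s a ->
  s 0 = s0Gamma Gamma ->
  exists X : atom F A -> Prop,
    answer_set (pi_prog D Gamma n) X /\
    (forall t, t <= n -> forall l : lit F, X (Holds l t) <-> l \in s t) /\
    (forall t, t < n -> X (Occ (a t) t)).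
Proof.
move=> [_ _] [Hst Htr] Hs0.
pose ch t : option A := if t < n then Some (a t) else
   if t == n then [pick b | execb D b (s n)] else None.
pose X (x : atom F A) : Prop := match x with
  | Holds l t => t <= n /\ l \in s t
  | Possible b t => t <= n /\ executable D b (s t)
  | Occ b t => ch t = Some b
  | Nocc b t => exists c, ch t = Some c /\ c <> b end.
have chle : forall t b, ch t = Some b -> t <= n.
  move=> t b; rewrite /ch; case: ltnP => [/ltnW //|_].
  by case: eqP => [->|].
have chex : forall t b, ch t = Some b -> executable D b (s t).
  move=> t b; rewrite /ch; case: ltnP => [Ht [<-]|_]; first by case: (Htr t Ht).
  case: eqP => [->|//]; case: pickP => // c Hc [<-]; exact/execbP.
have consX : forall t l, t <= n -> l \in s t -> compl l \notin s t.
  move=> t [f b] Ht Hl; apply/negP => Hc.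
  case: (Hst t Ht) => [[Hcs _] _]; apply: (Hcs f).
  by case: b Hl Hc => /= H1 H2; split.
have compX : forall t l, t <= n -> compl l \notin s t -> l \in s t.
  move=> t [f b] Ht Hc; case: (Hst t Ht) => Hi _.
  case: (interp_complete Hi f) => H; case: b Hc => //= /negP; by case.
have chn : forall t b, t < n -> ch t = Some b -> b = a t.
  by move=> t b Ht; rewrite /ch Ht => -[].
have Phis : forall t, t < n -> Phi D (a t) (s t) (s t.+1) := Htr.
exists X; split; last split.
- split.
  + move=> r h Hr; case: Hr => /=.
    * move=> l Hl [<-] _ _; split => //; by rewrite Hs0 inE.
    * move=> b P t HP Ht [<-] _ Hb; split => //; exists P => //.
      apply/allP => p Hp; have [] := Hb (Holds p t) => //.
      exact: In_holds_all_rev.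
    * move=> b f P t Hd Ht [<-] _ Hb.
      have Hoc : ch t = Some b by apply: (Hb (Occ b t)); left.
      have Eb := chn _ _ Ht Hoc; subst b.
      have HP : lits_in P (s t).
        apply/allP => p Hp; have [] := Hb (Holds p t) => //.
        by right; right; exact: In_holds_all_rev.
      have [_ [_ [_ _ Hsub _]]] := Phis t Ht.
      split => //; apply: (subsetP Hsub); apply/setUP; left.
      rewrite inE; apply/hasP; exists (a t, f, P) => //=; by rewrite !eqxx.
    * move=> P f t HPf Ht [<-] _ Hb; split => //.
      case: (Hst t Ht) => _ Hcl; apply: (Hcl (P, f) HPf) => /=.
      apply/allP => p Hp; have [] := Hb (Holds p t) => //.
      exact: In_holds_all_rev.
    * move=> b t Ht [<-] Hneg Hb.
      have [_ Hex] := Hb (Possible b t) (or_introl erefl).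
      change (ch t = Some b); case Hc: (ch t) => [c|].
      - case: (eqVneq c b) => [->//|Hcb].
        exfalso; apply: (Hneg (Nocc b t) (or_introl erefl)).
        by exists c; split => //; apply/eqP.
      - move: Hc; rewrite /ch; case: ltnP => // Hnt.
        have Etn : t = n by apply/eqP; rewrite eqn_leq Ht Hnt.
        subst t; rewrite eqxx.
        case: pickP => // Hno _; move/execbP: Hex; by rewrite Hno.
    * move=> b c t Hbc Ht [<-] _ Hb.
      exists c; split; first by apply: (Hb (Occ c t)); left.
      by move=> E; move: Hbc; rewrite E eqxx.
    * move=> l t Ht [<-] Hneg Hb.
      have [_ Hl] := Hb (Holds l t) (or_introl erefl).
      split => //; apply: compX => //; apply/negP => Hc.
      by apply: (Hneg (Holds (compl l) t.+1) (or_introl erefl)).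
    * by [].
  + move=> S' HS'.
    have Hposs : forall t b, (forall l, l \in s t -> S' (Holds l t)) -> t <= n ->
        executable D b (s t) -> S' (Possible b t).
      move=> t b H1 Ht [P HP HPs].
      apply: (HS' _ _ (pi2 Gamma HP Ht)) => //= x /In_holds_all [p [-> Hp]].
      apply: H1; exact: (allP HPs).
    have Hocc : forall t b, (forall l, l \in s t -> S' (Holds l t)) ->
        ch t = Some b -> S' (Occ b t).
      move=> t b H1 Hc; have Ht := chle _ _ Hc.
      apply: (HS' _ _ (pi5 D Gamma b Ht)) => //= x.
      - case => // <- [c [Hc' Hcb]]; apply: Hcb; rewrite Hc in Hc'; by case: Hc'.
      - case => // <-; apply: Hposs => //; exact: chex Hc.
    have H1 : forall t, t <= n -> forall l, l \in s t -> S' (Holds l t).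
      elim=> [|t IH] Ht l Hl.
      * rewrite Hs0 inE in Hl.
        by apply: (HS' _ _ (pi1 D n Hl)).
      * have Htn : t < n by [].
        have IH' := IH (ltnW Ht).
        have [_ [_ [Hcs Hcl Hsub Hmin]]] := Phis t Htn.
        pose w := [set l | (l \in s t.+1) && pb (S' (Holds l t.+1))].
        suff : s t.+1 \subset w.
          by move/subsetP => /(_ l Hl); rewrite inE => /andP [_ /pbP].
        apply: Hmin.
        -- move=> f [H2 H3]; apply: (Hcs f); move: H2 H3; rewrite !inE.
           by case/andP => -> _ /andP [-> _].
        -- move=> [P f] HPf /= HP.
           have HP' : lits_in P (s t.+1).
             apply/allP => p Hp; move: (allP HP p Hp); by rewrite inE => /andP [].
           have Hf := Hcl _ HPf HP'; rewrite inE Hf /=; apply/pbP.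
           apply: (HS' _ _ (pi4 Gamma HPf Ht)) => //= x /In_holds_all [p [-> Hp]].
           by move: (allP HP p Hp); rewrite inE => /andP [_ /pbP].
        -- apply/subsetP => f Hf.
           have Hf1 : f \in s t.+1 by apply: (subsetP Hsub).
           rewrite inE Hf1 /=; apply/pbP.
           case/setUP: Hf.
           ++ rewrite inE => /hasP [[[b g] P] Hd /= /and3P [/eqP Eb /eqP Eg HP]].
              subst b g.
              apply: (HS' _ _ (pi3 Gamma Hd Htn)) => //= x.
              case => [<-|]; first by apply: Hocc => //; rewrite /ch Htn.
              case => [<-|]; first by apply: Hposs => //; [exact: ltnW | case: (Phis t Htn)].
              move/In_holds_all => [p [-> Hp]]; apply: IH'; exact: (allP HP).
           ++ rewrite inE => /andP [Hft Hft1].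
              apply: (HS' _ _ (pi7 D Gamma f Htn)) => //= x.
              ** case => // <- [_ Hc]; by move: (consX _ _ Ht Hft1); rewrite Hc.
              ** case => // <-; exact: IH'.
    case=> [l t [Ht Hl]|b t [Ht Hb]|b t Hc|b t [c [Hc Hcb]]].
    * exact: H1.
    * apply: Hposs => //; exact: H1.
    * exact: (Hocc _ _ (H1 _ (chle _ _ Hc)) Hc).
    * have Ht := chle _ _ Hc.
      apply: (HS' _ _ (pi6 D Gamma (b := c) _ Ht)) => //=.
      -- by apply/eqP => E; apply: Hcb; rewrite E.
      -- move=> x [<-|//]; exact: (Hocc _ _ (H1 _ (chle _ _ Hc)) Hc).
  + move=> r Hr; case: Hr => //= f t Ht _ _ Hb.
    have [_ H1] := Hb (Holds (pos_lit f) t) (or_introl erefl).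
    have [_ H2] := Hb (Holds (neg_lit f) t) (or_intror (or_introl erefl)).
    by case: (Hst t Ht) => [[Hc _] _]; apply: (Hc f).
- by move=> t Ht l; split => [[]|] .
- move=> t Ht /=; by rewrite /ch Ht.
Qed.
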